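(* Let $X$ be any Banach space and let $Y$ be a Banach space whose unit ball has a strongly exposed point $y_0\in S_Y$. Let $E=X\oplus_1Y$. Then for every $\varepsilon>0$ there is a convex combination of slices of $B_E$ containing $0$ and of diameter at most $4\varepsilon$ (i.e., there are ccs of $B_E$ around $0$ of arbitrarily small diameter). In particular, $E$ contains no ccs Daugavet point and fails the strong diameter 2 property.
   Context: $X\oplus_1Y$ is $X\times Y$ with norm $\|(x,y)\|=\|x\|+\|y\|$. A point $y_0\in B_Y$ is strongly exposed if there is $y_0^*\in S_{Y^*}$ with $\operatorname{Re}y_0^*(y_0)=1$ such that $\|y_n-y_0\|\to0$ whenever $y_n\in B_Y$ and $\operatorname{Re}y_0^*(y_n)\to1$. A slice of $B_E$ is a non-empty set $\{u\in B_E:\operatorname{Re}f(u)>\|f\|-\delta\}$ with $f\in E^*$, $\delta>0$; a ccs of $B_E$ is $\sum_{i=1}^n\lambda_iS_i$ with $\lambda_i\in(0,1]$, $\sum\lambda_i=1$, $S_i$ slices. $u\in S_E$ is a ccs Daugavet point if $\sup_{v\in C}\|u-v\|=2$ for every ccs $C$ of $B_E$. The strong diameter 2 property means every ccs of the unit ball has diameter $2$. *)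

(* Defs.v *)
From HB Require Import structures.
From mathcomp Require Import all_boot all_order all_algebra.
From mathcomp Require Import all_classical all_reals all_analysis.
Set Implicit Arguments. Unset Strict Implicit. Unset Printing Implicit Defensive.
Import Order.TTheory GRing.Theory Num.Theory.
Import numFieldNormedType.Exports.
Local Open Scope classical_set_scope.
Local Open Scope ring_scope.

Section Generic.
Variables (R : realType) (V : lmodType R) (N : V -> R).

Definition ball1 : set V := [set u | N u <= 1].

(* bounded (= continuous) real linear functionals, i.e. elements of V^* *)
Definition bdd_functional (f : V -> R) : Prop :=
  (forall (a : R) (u v : V), f (a *: u + v) = a * f u + f v) /\
  exists M : R, forall u, `|f u| <= M * N u.

Definition fnorm (f : V -> R) : R := sup [set `|f u| | u in ball1].

Definition slice (f : V -> R) (d : R) : set V :=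
  [set u | ball1 u /\ fnorm f - d < f u].

Definition is_slice (S : set V) : Prop :=
  exists (f : V -> R) (d : R),
    [/\ bdd_functional f, 0 < d, S = slice f d & S !=set0].

Definition is_ccs (C : set V) : Prop :=
  exists (n : nat) (lam : 'I_n -> R) (S : 'I_n -> set V),
    [/\ (0 < n)%N, (forall i, 0 < lam i <= 1), \sum_(i < n) lam i = 1,
        (forall i, is_slice (S i)) &
        C = [set v | exists u : 'I_n -> V,
                (forall i, S i (u i)) /\ v = \sum_(i < n) lam i *: u i]].

Definition ccs_daugavet_point (u : V) : Prop :=
  N u = 1 /\ forall C, is_ccs C -> sup [set N (u - v) | v in C] = 2.

Definition diam (C : set V) : R :=
  sup [set r | exists v w, [/\ C v, C w & r = N (v - w)]].

Definition strong_diameter_two : Prop :=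
  forall C, is_ccs C -> diam C = 2.

Definition strongly_exposed (y0 : V) : Prop :=
  ball1 y0 /\
  exists f : V -> R,
    [/\ bdd_functional f, fnorm f = 1, f y0 = 1 &
        forall yn : nat -> V, (forall n, ball1 (yn n)) ->
          (fun n => f (yn n)) @ \oo --> (1 : R) ->
          (fun n => N (yn n - y0)) @ \oo --> (0 : R)].

End Generic.

(* the l1-norm on X (+)_1 Y, carried by the product type X * Y *)
Definition norm1 (R : realType) (X Y : normedModType R) (u : X * Y) : R :=
  `|u.1| + `|u.2|.

(* Main.v *)
Require Import Defs.
From HB Require Import structures.
From mathcomp Require Import all_boot all_order all_algebra.
From mathcomp Require Import all_classical all_reals all_analysis.
From mathcomp Require Import lra.
Import Order.TTheory GRing.Theory Num.Theory.
Import numFieldNormedType.Exports.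
Local Open Scope classical_set_scope.
Local Open Scope ring_scope.

Section Aux.
Variables (R : realType) (V : lmodType R) (N : V -> R).
Hypothesis N0 : forall u, 0 <= N u.

Lemma fbound (f : V -> R) : bdd_functional N f ->
  forall u, N u <= 1 -> `|f u| <= fnorm N f.
Proof.
move=> [_ [M HM]] u Hu; apply: ub_le_sup; last by exists u.
exists `|M| => _ [v Hv <-].
apply: (le_trans (HM v)).
apply: (le_trans (y := `|M| * N v)); first by apply: ler_wpM2r => //; exact: ler_norm.
by rewrite -[X in _ <= X]mulr1; apply: ler_wpM2l => //.
Qed.

Lemma lin0 (f : V -> R) : bdd_functional N f -> f 0 = 0.
Proof.
move=> [L _]; have := L 1 0 0; rewrite scale1r addr0 mul1r => h; lra.
Qed.

Lemma linN (f : V -> R) : bdd_functional N f -> forall u, f (- u) = - f u.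
Proof.
move=> hf u; have [L _] := hf; have := L (-1) u 0.
by rewrite scaleN1r addr0 (@lin0 f hf) addr0 mulN1r.
Qed.
End Aux.

Section SE.
Variables (R : realType) (Y : normedModType R).

Lemma se_eps (y0 : Y) (f : Y -> R) :
  bdd_functional (fun y : Y => `|y|) f -> fnorm (fun y : Y => `|y|) f = 1 ->
  (forall yn : nat -> Y, (forall n, ball1 (fun y : Y => `|y|) (yn n)) ->
          (fun n => f (yn n)) @ \oo --> (1 : R) ->
          (fun n => `|yn n - y0|) @ \oo --> (0 : R)) ->
  forall e : R, 0 < e -> exists d : R, 0 < d /\
    forall y, `|y| <= 1 -> 1 - d < f y -> `|y - y0| < e.
Proof.
move=> hf fn1 Hse e e0; apply: contrapT => Hn.
have Hex : forall n : nat, exists y : Y,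
    [/\ `|y| <= 1, 1 - n.+1%:R^-1 < f y & e <= `|y - y0|].
  move=> n; apply: contrapT => Hne; apply: Hn; exists n.+1%:R^-1; split.
    by rewrite invr_gt0 ltr0n.
  move=> y h1 h2; rewrite ltNge; apply/negP => h3; apply: Hne; by exists y.
have [yn Hyn] := choice Hex.
have Hb : forall n, ball1 (fun y : Y => `|y|) (yn n) by move=> n; have [] := Hyn n.
have := Hse yn Hb.
have Hc : (fun n => f (yn n)) @ \oo --> (1 : R).
  apply/cvgrPdist_lt => eps eps0.
  have := near_infty_natSinv_lt (PosNum eps0).
  apply: filterS => n /= hn.
  have [h1 h2 _] := Hyn n.
  have h4 := @fbound R Y _ (fun y => normr_ge0 y) f hf _ h1; rewrite fn1 in h4.
  have h5 : f (yn n) <= 1 by apply: le_trans h4; exact: ler_norm.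
  rewrite ger0_norm; last by rewrite subr_ge0.
  have h6 : 1 - f (yn n) < n.+1%:R^-1 by rewrite ltrBlDr addrC -ltrBlDr.
  exact: lt_trans h6 hn.
move=> /(_ Hc) /cvgrPdist_lt /(_ e e0) H.
have [n /= Hn'] := filter_ex H.
have [_ _ h3] := Hyn n.
move: Hn'; rewrite sub0r normrN ger0_norm //; lra.
Qed.
End SE.

Section Prod.
Variables (R : realType) (X Y : normedModType R).

Lemma norm1_ge0 (u : X * Y) : 0 <= norm1 u.
Proof. by rewrite /norm1 addr_ge0. Qed.

Lemma norm1B (u v : X * Y) : norm1 (u - v) <= norm1 u + norm1 v.
Proof.
rewrite /norm1 /=.
have h1 := ler_normB u.1 v.1; have h2 := ler_normB u.2 v.2; lra.
Qed.

Lemma reassoc (V : zmodType) (a b c : V) : (a - c) + (b + c) = a + b.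
Proof. by rewrite addrACA addNr addr0. Qed.

Lemma key4 (V : normedModType R) (a b a' b' c : V) :
  `|a + b - (a' + b')| <= `|a - c| + `|b + c| + `|a' - c| + `|b' + c|.
Proof.
rewrite -(@reassoc _ a b c) -(@reassoc _ a' b' c).
have h1 := ler_normB (a - c + (b + c)) (a' - c + (b' + c)).
have h2 := ler_normD (a - c) (b + c).
have h3 := ler_normD (a' - c) (b' + c).
lra.
Qed.
End Prod.

Theorem mainTheorem8 (R : realType) (X Y : completeNormedModType R) (y0 : Y) :
  `|y0| = 1 -> strongly_exposed (fun y : Y => `|y|) y0 ->
  [/\ (forall eps : R, 0 < eps ->
         exists C : set (X * Y),
           [/\ is_ccs (@norm1 R X Y) C, C 0 &
               forall v w, C v -> C w -> norm1 (v - w) <= 4 * eps]),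
      ~ (exists u : X * Y, ccs_daugavet_point (@norm1 R X Y) u) &
      ~ strong_diameter_two (@norm1 R X Y)].
Proof.
move=> ny0 [_ [f [hf fn1 fy0 Hse]]].
have fN := @linN _ _ _ f hf.
have part1 : forall eps : R, 0 < eps ->
         exists C : set (X * Y),
           [/\ is_ccs (@norm1 R X Y) C, C 0 &
               forall v w, C v -> C w -> norm1 (v - w) <= 4 * eps].
  move=> eps eps0.
  have [d [d0 Hd]] := @se_eps R Y y0 f hf fn1 Hse eps eps0.
  pose F1 := fun u : X * Y => f u.2.
  pose F2 := fun u : X * Y => - f u.2.
  have [L [M HM]] := hf.
  have hF1 : bdd_functional (@norm1 R X Y) F1.
    split; first by move=> a u v; rewrite /F1 /= L.
    exists `|M| => u; rewrite /F1 /norm1.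
    apply: (le_trans (HM u.2)).
    apply: (le_trans (y := `|M| * `|u.2|)); first by apply: ler_wpM2r => //; exact: ler_norm.
    by apply: ler_wpM2l => //; rewrite lerDr.
  have hF2 : bdd_functional (@norm1 R X Y) F2.
    split; first by move=> a u v; rewrite /F2 /= L opprD mulrN.
    exists `|M| => u; rewrite /F2 /norm1 normrN.
    apply: (le_trans (HM u.2)).
    apply: (le_trans (y := `|M| * `|u.2|)); first by apply: ler_wpM2r => //; exact: ler_norm.
    by apply: ler_wpM2l => //; rewrite lerDr.
  have setE : forall g : Y -> R, (forall y, `|g y| = `|f y|) ->
      [set `|g u.2| | u in ball1 (@norm1 R X Y)] =
      [set `|f y| | y in ball1 (fun y : Y => `|y|)].
    move=> g hg; apply/seteqP; split => r [u Hu <-].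
      exists u.2; last by rewrite hg.
      move: Hu; rewrite /ball1 /norm1 /= => Hu.
      have := normr_ge0 u.1; lra.
    exists ((0 : X), u); last by rewrite hg.
    by move: Hu; rewrite /ball1 /norm1 /= normr0 add0r.
  have fn1' : fnorm (@norm1 R X Y) F1 = 1.
    by rewrite /fnorm /F1 (setE f) //; exact: fn1.
  have fn2' : fnorm (@norm1 R X Y) F2 = 1.
    rewrite /fnorm /F2 (setE (fun y => - f y)); [exact: fn1 | by move=> y; rewrite normrN].
  pose S1 := slice (@norm1 R X Y) F1 d.
  pose S2 := slice (@norm1 R X Y) F2 d.
  have H1 : forall u, S1 u -> `|u.1| < eps /\ `|u.2 - y0| < eps.
    move=> u [Hb Hs]; move: Hb Hs; rewrite /ball1 /norm1 fn1' /F1 /= => Hb Hs.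
    have h0 := normr_ge0 u.1.
    have h1 : `|u.2 - y0| < eps by apply: Hd => //; lra.
    have h2 := ler_normB u.2 (u.2 - y0).
    have e1 : u.2 - (u.2 - y0) = y0 by rewrite opprB addrC subrK.
    rewrite e1 ny0 in h2; split => //; lra.
  have H2 : forall u, S2 u -> `|u.1| < eps /\ `|u.2 + y0| < eps.
    move=> u [Hb Hs]; move: Hb Hs; rewrite /ball1 /norm1 fn2' /F2 /= => Hb Hs.
    have h0 := normr_ge0 u.1.
    have h1 : `|- u.2 - y0| < eps by apply: Hd; rewrite ?normrN ?fN; lra.
    rewrite -opprD normrN in h1.
    have h2 := ler_normB (u.2 + y0) u.2.
    have e1 : u.2 + y0 - u.2 = y0 by rewrite addrC addKr.
    rewrite e1 ny0 in h2; split => //; lra.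
  pose S := fun i : 'I_2 => if val i == 0%N then S1 else S2.
  pose lam := fun i : 'I_2 => (2 : R)^-1.
  pose C := [set v | exists u : 'I_2 -> X * Y,
                (forall i, S i (u i)) /\ v = \sum_(i < 2) lam i *: u i].
  have S1y0 : S1 (0, y0).
    split; first by rewrite /ball1 /norm1 /= normr0 add0r ny0.
    by rewrite fn1' /F1 /= fy0; lra.
  have S2y0 : S2 (0, - y0).
    split; first by rewrite /ball1 /norm1 /= normr0 add0r normrN ny0.
    by rewrite fn2' /F2 /= fN opprK fy0; lra.
  exists C; split.
  - exists 2%N, lam, S; split => //.
    + by move=> i; rewrite /lam invr_gt0 ltr0n /= invf_le1 ?ler1n ?ltr0n.
    + by rewrite /lam !big_ord_recl big_ord0 addr0; lra.
    + move=> i; rewrite /S; case: ifP => _.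
        by exists F1, d; split => //; exists (0, y0).
      by exists F2, d; split => //; exists (0, - y0).
  - exists (fun i : 'I_2 => if val i == 0%N then (0, y0) else (0, - y0)); split.
      by move=> i; rewrite /S; case: ifP.
    rewrite !big_ord_recl big_ord0 addr0 /= -scalerDr.
    have E : (((0:X), y0) + (0, - y0) : X*Y) = ((0:X) + 0, y0 - y0) := erefl.
    rewrite E addr0 subrr.
    have -> : (((0:X),(0:Y)) : X*Y) = 0 := erefl.
    by rewrite scaler0.
  - move=> v w [u [Hu ->]] [u' [Hu' ->]].
    rewrite !big_ord_recl !big_ord0 !addr0.
    have A1 := H1 _ (Hu ord0); have A2 := H2 _ (Hu (lift ord0 ord0)).
    have B1 := H1 _ (Hu' ord0); have B2 := H2 _ (Hu' (lift ord0 ord0)).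
    move: A1 A2 B1 B2; rewrite /lam /norm1 /=.
    set a := u ord0; set b := u (lift ord0 ord0).
    set a' := u' ord0; set b' := u' (lift ord0 ord0).
    move=> [a1 a2] [b1 b2] [a1' a2'] [b1' b2'].
    rewrite -!scalerDr -!scalerBr !normrZ ger0_norm ?invr_ge0 ?ler0n //.
    have k1 := @key4 R X a.1 b.1 a'.1 b'.1 0.
    have k2 := @key4 R Y a.2 b.2 a'.2 b'.2 y0.
    rewrite !subr0 !addr0 in k1.
    lra.
have [C [Cc C0 Cd]] := part1 (8%:R^-1) ltac:(by rewrite invr_gt0 ltr0n).
have Cb : forall v, C v -> norm1 v <= 2^-1.
  move=> v Cv; have := Cd v 0 Cv C0; rewrite subr0; lra.
split => //.
- move=> [u [nu Hu]]; have := Hu C Cc.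
  have : sup [set norm1 (u - v) | v in C] <= 3 / 2.
    apply: ge_sup; first by exists (norm1 (u - 0)), 0.
    move=> _ [v Cv <-]; have := @norm1B R X Y u v; have := Cb v Cv; lra.
  lra.
- move=> H; have := H C Cc; rewrite /diam.
  have : sup [set r | exists v w, [/\ C v, C w & r = norm1 (v - w)]] <= 2^-1.
    apply: ge_sup; first by exists (norm1 ((0 : X * Y) - 0)), 0, 0.
    move=> _ [v [w [Cv Cw ->]]]; have := Cd v w Cv Cw; lra.
  lra.
Qed.
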